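(* Let $C=(C_{i,i'})_{1\le i,i'\le l}$ be a symmetric matrix. For all $m\in\mathbb Z_{\ge0}^l$, $$I_{C,m}(q,z)=\sum_{a\in\mathbb Z^l,\ 0\le a\le m}\frac{z^a q^{W_{C,a}}}{(q)_{m-a}}\,I_{C,a}(q,z),$$ where $0\le a\le m$ means $0\le a_i\le m_i$ for all $i$. Moreover, the solution of this recursion is unique once $I_{C,0}(q,z)=1$ is fixed.
   Context: Let $(q)_n=\prod_{k=1}^n(1-q^k)$ and, for $n\in\mathbb Z^l_{\ge0}$, $(q)_n=\prod_i(q)_{n_i}$; $z^a=\prod_i z_i^{a_i}$; $W_{C,a}=\frac12\big(\sum_{i,i'}C_{i,i'}a_ia_{i'}-\sum_iC_{i,i}a_i\big)$. Powers $q^{c}$ with $c$ a linear combination of entries of $C$ are treated as formal symbols with $q^aq^b=q^{a+b}$. For $m=(m_1,\dots,m_l)\in\mathbb Z^l_{\ge0}$ define the formal power series in $z=(z_1,\dots,z_l)$ $$I_{C,m}(q,z)=\sum_{\mathbf m}\prod_{i=1}^l z_i^{\sum_{t\ge0}t m_{i,t}}\frac{q^{Q_C(\mathbf m)}}{\prod_{i,t}(q)_{m_{i,t}}},$$ the sum over all tuples $\mathbf m=(m_{i,t})_{1\le i\le l,\ t\ge0}$ of nonnegative integers with $\sum_{t\ge0}m_{i,t}=m_i$ for each $i$, where $Q_C(\mathbf m)=\frac12\sum_{i,i'}\sum_{t,t'\ge0}C_{i,i'}\min(t,t')m_{i,t}m_{i',t'}-\frac12\sum_i\sum_{t\ge0}C_{i,i}\,t\,m_{i,t}$.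 *)

(* Defs.v *)
From HB Require Import structures.
From mathcomp Require Import all_boot all_order all_algebra.
Set Implicit Arguments. Unset Strict Implicit. Unset Printing Implicit Defensive.
Import Order.TTheory GRing.Theory Num.Theory.
Local Open Scope ring_scope.

Notation idx l := {ffun 'I_l -> nat}.

Definition idx0 (l : nat) : idx l := [ffun=> 0%N].

Section Defs.
(* G   : the Q-vector space of formal exponents of q.
   qpow: the formal power  c |-> q^c  (a morphism (G,+) -> (A,times), see the
         hypotheses of the theorem).
   e1  : the exponent "1", i.e. q = q^{e1}. *)
Variables (A : comUnitRingType) (G : lmodType rat) (qpow : G -> A) (e1 : G).
Variables (l : nat) (C : 'M[G]_l).

Definition qq : A := qpow e1.

Definition qfac (n : nat) : A := \prod_(1 <= k < n.+1) (1 - qq ^+ k).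

Definition qfacv (n : idx l) : A := \prod_(i < l) qfac (n i).

Definition Wexp (a : idx l) : G :=
  (1 / 2 : rat) *: (\sum_(i < l) \sum_(i' < l) C i i' *+ (a i * a i')
                    - \sum_(i < l) C i i *+ a i).

Definition Qexp (T M : nat) (mt : {ffun 'I_l -> {ffun 'I_T -> 'I_M}}) : G :=
  (1 / 2 : rat) *:
    (\sum_(i < l) \sum_(i' < l) \sum_(t < T) \sum_(t' < T)
        C i i' *+ (minn t t' * mt i t * mt i' t')
     - \sum_(i < l) \sum_(t < T) C i i *+ (t * mt i t)).

(* Coefficient of z^d in I_{C,m}(q,z), summing over the tuples
   (m_{i,t}) with t < T, m_{i,t} < M, sum_t m_{i,t} = m_i and
   sum_t t m_{i,t} = d_i.  For T = (sum_i d_i).+1 and M = (sum_i m_i).+1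
   these are exactly all tuples (m_{i,t})_{i, t>=0} contributing to z^d
   (necessarily m_{i,t} = 0 for t > d_i, and m_{i,t} <= m_i). *)
Definition Icoef_aux (T M : nat) (m d : idx l) : A :=
  \sum_(mt : {ffun 'I_l -> {ffun 'I_T -> 'I_M}} |
          [forall i, ((\sum_(t < T) (mt i t : nat))%N == m i)
                     && ((\sum_(t < T) t * mt i t)%N == d i)])
     qpow (Qexp mt) * (\prod_(i < l) \prod_(t < T) qfac (mt i t))^-1.

Definition Icoef (m d : idx l) : A :=
  Icoef_aux (\sum_(i < l) d i).+1 (\sum_(i < l) m i).+1 m d.

(* Coefficient of z^d in  sum_{0 <= a <= m} z^a q^{W_{C,a}} / (q)_{m-a} * J_a,
   where J : idx l -> (idx l -> A) is a family of formal power series in z,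
   J a being given by its coefficient function (J a e = coeff of z^e). *)
Definition zrec (J : idx l -> idx l -> A) (m d : idx l) : A :=
  \sum_(a : {ffun 'I_l -> 'I_(\sum_(i < l) m i).+1} | [forall i, (a i <= m i)%N])
    let a' : idx l := [ffun i => nat_of_ord (a i)] in
    if [forall i, (a' i <= d i)%N] then
      qpow (Wexp a') * (qfacv [ffun i => (m i - a' i)%N])^-1
        * J a' [ffun i => (d i - a' i)%N]
    else 0.

End Defs.

(* Main.v *)
Require Import Defs.
From HB Require Import structures.
From mathcomp Require Import all_boot all_order all_algebra.
From Stdlib Require Import FunctionalExtensionality.
From mathcomp Require Import zify.
Set Implicit Arguments. Unset Strict Implicit. Unset Printing Implicit Defensive.
Import Order.TTheory GRing.Theory Num.Theory.
Local Open Scope ring_scope.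

Lemma big_supp (R : Type) (idx : R) (op : Monoid.law idx) (F : nat -> R) K N :
  (forall t, (K <= t)%N -> F t = idx) -> (K <= N)%N ->
  \big[op/idx]_(t < N) F t = \big[op/idx]_(t < K) F t.
Proof.
move=> HF; elim: N => [|N IH]; first by rewrite leqn0 => /eqP ->.
rewrite leq_eqVlt => /orP [/eqP -> //| ltKN].
by rewrite big_ord_recr /= IH // HF // Monoid.mulm1.
Qed.

Local Close Scope ring_scope.

Definition S0 N (F : nat -> nat) := (\sum_(t < N) F t)%N.
Definition S1 N (F : nat -> nat) := (\sum_(t < N) t * F t)%N.
Definition S2 N (F H : nat -> nat) :=
  (\sum_(t < N) \sum_(t' < N) minn t t' * F t * H t')%N.

Lemma S0_rec N f : S0 N.+1 f = f 0 + S0 N (fun t => f t.+1).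
Proof. by rewrite /S0 big_ord_recl. Qed.

Lemma S1_rec N f : S1 N.+1 f = S0 N (fun t => f t.+1) + S1 N (fun t => f t.+1).
Proof.
rewrite /S1 /S0 big_ord_recl /= mul0n add0n -big_split /=.
by apply: eq_bigr => t _; rewrite ?lift0 mulSn.
Qed.

Lemma S2_rec N f g : S2 N.+1 f g =
  S0 N (fun t => f t.+1) * S0 N (fun t => g t.+1) +
  S2 N (fun t => f t.+1) (fun t => g t.+1).
Proof.
rewrite /S2 /S0 big_ord_recl /= big1 ?add0n; last by move=> t _; rewrite min0n.
rewrite big_distrl /= -big_split /=; apply: eq_bigr => t _.
rewrite big_ord_recl /= minn0 !mul0n add0n big_distrr /= -big_split /=.
by apply: eq_bigr => t' _; rewrite ?lift0 minnSS /= !mulSn mulnDl.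
Qed.

Lemma S0_le N f t : t < N -> f t <= S0 N f.
Proof. by move=> lt; rewrite /S0 (bigD1 (Ordinal lt)) //= leq_addr. Qed.

Lemma S1_le N f t : t < N -> 0 < f t -> t <= S1 N f.
Proof.
move=> lt pos; apply: (@leq_trans (t * f t)); first exact: leq_pmulr.
by rewrite /S1 (bigD1 (Ordinal lt)) //= leq_addr.
Qed.

Lemma S0_supp K N f : (forall t, K <= t -> f t = 0) -> K <= N -> S0 N f = S0 K f.
Proof.
move=> H; elim: N => [|N IH]; first by rewrite leqn0 => /eqP ->.
rewrite leq_eqVlt => /orP [/eqP -> //| lt].
by rewrite /S0 big_ord_recr /= -/(S0 N f) IH // H // addn0.
Qed.

Lemma S1_supp K N f : (forall t, K <= t -> f t = 0) -> K <= N -> S1 N f = S1 K f.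
Proof.
move=> H; elim: N => [|N IH]; first by rewrite leqn0 => /eqP ->.
rewrite leq_eqVlt => /orP [/eqP -> //| lt].
by rewrite /S1 big_ord_recr /= -/(S1 N f) IH // H // muln0 addn0.
Qed.

Lemma S2_supp K N f g : (forall t, K <= t -> f t = 0) ->
  (forall t, K <= t -> g t = 0) -> K <= N -> S2 N f g = S2 K f g.
Proof.
move=> Hf Hg; elim: N => [|N IH]; first by rewrite leqn0 => /eqP ->.
rewrite leq_eqVlt => /orP [/eqP -> //| lt].
rewrite -IH // /S2 big_ord_recr /= Hf // [X in _ + X]big1 ?addn0; last by move=> t _; rewrite muln0 mul0n.
apply: eq_bigr => t _.
by rewrite big_ord_recr /= Hg // muln0 addn0.
Qed.


Lemma le_sum l (f : 'I_l -> nat) i : f i <= \sum_(j < l) f j.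
Proof. by rewrite (bigD1 i) //= leq_addr. Qed.

Lemma arith1 t x a dd T : a <= dd -> t <= dd - a -> x <= a -> 0 < x -> dd <= T -> T <= t -> False.
Proof. lia. Qed.

Lemma arith2 x y n : 0 < x -> x + y <= n.+1 -> y <= n.
Proof. lia. Qed.

Local Open Scope ring_scope.

Lemma sum_bij (R : nmodType) (X Y : finType) (P : pred X) (Q : pred Y)
  (f : X -> R) (g : Y -> R) (h : Y -> X) (k : X -> Y) :
  (forall x, P x -> Q (k x) && (h (k x) == x)) ->
  (forall y, Q y -> P (h y) && (k (h y) == y)) ->
  (forall y, Q y -> f (h y) = g y) ->
  \sum_(x | P x) f x = \sum_(y | Q y) g y.
Proof.
move=> H1 H2 H3.
rewrite (reindex_onto h k) => [|x Px]; last by case/andP: (H1 x Px) => _ /eqP.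
apply: eq_big => [y|y /andP [Phy /eqP E]].
  apply/idP/idP => [/andP [Phy /eqP <-]| Qy]; first by case/andP: (H1 _ Phy).
  exact: H2.
rewrite H3 //; have := H1 _ Phy; by rewrite E => /andP [].
Qed.

Section Main.
Variables (A : comUnitRingType) (G : lmodType rat) (qpow : G -> A) (e1 : G)
  (l : nat) (C : 'M[G]_l).
Hypotheses (qpow0 : qpow 0 = 1)
  (qpowD : forall x y : G, qpow (x + y) = qpow x * qpow y)
  (qfac_unit : forall n : nat, qfac qpow e1 n \is a GRing.unit).

Local Notation qf := (qfac qpow e1).
Local Notation X T M := {ffun 'I_l -> {ffun 'I_T -> 'I_M}}.
Local Notation nf := ('I_l -> nat -> nat).

Definition QF N (F : nf) : G := (1/2 : rat) *:
  (\sum_(i < l) \sum_(i' < l) C i i' *+ S2 N (F i) (F i')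
   - \sum_(i < l) C i i *+ S1 N (F i)).
Definition PF N (m d : idx l) (F : nf) :=
  [forall i, (S0 N (F i) == m i) && (S1 N (F i) == d i)].
Definition fF N (F : nf) :=
  qpow (QF N F) * (\prod_(i < l) \prod_(t < N) qf (F i t))^-1.
Definition V T0 M (mt : X T0.+1 M) : nf :=
  fun i t => if (t < T0.+1)%N then nat_of_ord (mt i (inord t)) else 0%N.
Definition B T0 M0 (F : nf) : X T0.+1 M0.+1 :=
  [ffun i => [ffun t : 'I_T0.+1 => inord (F i t)]].

Lemma V_ord T0 M (mt : X T0.+1 M) i (t : 'I_T0.+1) : V mt i t = mt i t.
Proof. by rewrite /V ltn_ord inord_val. Qed.

Lemma V_out T0 M (mt : X T0.+1 M) i t : (T0.+1 <= t)%N -> V mt i t = 0%N.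
Proof. by rewrite /V leqNgt => /negbTE ->. Qed.

Lemma BV T0 M0 (mt : X T0.+1 M0.+1) : @B T0 M0 (V mt) = mt.
Proof.
apply/ffunP => i; apply/ffunP => t; rewrite !ffunE V_ord.
by apply: val_inj; rewrite /= inordK.
Qed.

Lemma VB T0 M0 (F : nf) : (forall i t, (T0.+1 <= t)%N -> F i t = 0%N) ->
  (forall i t, F i t <= M0)%N -> V (@B T0 M0 F) = F.
Proof.
move=> H1 H2; apply: functional_extensionality => i;
  apply: functional_extensionality => t.
rewrite /V; case: ifP => [lt|]; last by rewrite ltnNge => /negbFE /H1 ->.
by rewrite !ffunE (inordK lt) inordK // ltnS.
Qed.

Lemma Icoef_auxV T0 M (m d : idx l) N : (T0.+1 <= N)%N ->
  Icoef_aux qpow e1 C T0.+1 M m d =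
  \sum_(mt : X T0.+1 M | PF N m d (V mt)) fF N (V mt).
Proof.
move=> leTN; rewrite /Icoef_aux; apply: eq_big => mt.
  rewrite /PF; apply: eq_forallb => i.
  have E0 : S0 N (V mt i) = (\sum_(t < T0.+1) mt i t)%N.
    rewrite /S0 (@big_supp _ _ _ _ T0.+1) //; last by move=> t /V_out ->.
    by apply: eq_bigr => t _; rewrite V_ord.
  have E1 : S1 N (V mt i) = (\sum_(t < T0.+1) t * mt i t)%N.
    rewrite /S1 (@big_supp _ _ _ (fun t => (t * V mt i t)%N) T0.+1) //;
      last by move=> t /V_out ->; rewrite muln0.
    by apply: eq_bigr => t _; rewrite V_ord.
  by rewrite E0 E1.
move=> _; rewrite /fF; congr (qpow _ * _^-1).
  rewrite /Qexp /QF; congr (_ *: (_ - _)); apply: eq_bigr => i _.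
    apply: eq_bigr => i' _; rewrite /S2 -sumrMnr.
    rewrite [RHS](@big_supp _ _ _ (fun t => C i i' *+ (\sum_(t' < N) minn t t' * V mt i t * V mt i' t')%N) T0.+1) //; last first.
      by move=> t /V_out H; rewrite big1 // => t' _; rewrite H muln0 mul0n.
    apply: eq_bigr => t _; rewrite -sumrMnr.
    rewrite [RHS](@big_supp _ _ _ (fun t' => C i i' *+ (minn t t' * V mt i t * V mt i' t')%N) T0.+1) //; last first.
      by move=> t' /V_out H; rewrite H muln0 mulr0n.
    by apply: eq_bigr => t' _; rewrite !V_ord.
  rewrite /S1 -sumrMnr [RHS](@big_supp _ _ _ (fun t => C i i *+ (t * V mt i t)%N) T0.+1) //; last first.
    by move=> t /V_out H; rewrite H muln0 mulr0n.
  by apply: eq_bigr => t _; rewrite !V_ord.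
apply: eq_bigr => i _.
rewrite [RHS](@big_supp _ _ _ (fun t => qf (V mt i t)) T0.+1) //; last first.
  by move=> t /V_out ->; rewrite /qfac big_nil.
by apply: eq_bigr => t _; rewrite V_ord.
Qed.

Definition unshift (c : 'I_l -> nat) (Y : nf) : nf :=
  fun i t => if t is s.+1 then Y i s else c i.
Definition shift (Y : nf) : nf := fun i t => Y i t.+1.

Lemma QF_unshift N c (Y : nf) (a : idx l) :
  (forall i, S0 N (Y i) = a i) ->
  QF N.+1 (unshift c Y) = Wexp C a + QF N Y.
Proof.
move=> H.
have E2 i i' : S2 N.+1 (unshift c Y i) (unshift c Y i') =
    (a i * a i' + S2 N (Y i) (Y i'))%N.
  by rewrite S2_rec -!H.
have E1 i : S1 N.+1 (unshift c Y i) = (a i + S1 N (Y i))%N.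
  by rewrite S1_rec -!H.
rewrite /QF /Wexp -scalerDr; congr (_ *: _).
have -> : \sum_(i < l) \sum_(i' < l) C i i' *+ S2 N.+1 (unshift c Y i) (unshift c Y i') =
   \sum_(i < l) \sum_(i' < l) C i i' *+ (a i * a i')%N +
   \sum_(i < l) \sum_(i' < l) C i i' *+ S2 N (Y i) (Y i').
  rewrite -big_split; apply: eq_bigr => i _; rewrite -big_split.
  by apply: eq_bigr => i' _; rewrite E2 mulrnDr.
have -> : \sum_(i < l) C i i *+ S1 N.+1 (unshift c Y i) =
   \sum_(i < l) C i i *+ a i + \sum_(i < l) C i i *+ S1 N (Y i).
  by rewrite -big_split; apply: eq_bigr => i _; rewrite E1 mulrnDr.
by rewrite opprD addrACA.
Qed.

Lemma QF_supp K N (Y : nf) : (forall i t, (K <= t)%N -> Y i t = 0%N) ->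
  (K <= N)%N -> QF N Y = QF K Y.
Proof.
move=> H le; rewrite /QF; congr (_ *: (_ - _)); apply: eq_bigr => i _.
  by apply: eq_bigr => i' _; rewrite (@S2_supp K N _ _ (H i) (H i') le).
by rewrite (@S1_supp K N _ (H i) le).
Qed.

Lemma rec_main (m d : idx l) :
  Icoef qpow e1 C m d = zrec qpow e1 C (Icoef qpow e1 C) m d.
Proof.
rewrite /Icoef (@Icoef_auxV _ _ m d (\sum_(i < l) d i).+1) //.
set T0 := (\sum_(i < l) d i). set M0 := (\sum_(i < l) m i).
pose p (x : X T0.+1 M0.+1) : {ffun 'I_l -> 'I_M0.+1} :=
  [ffun i => inord (m i - V x i 0)].
have mM i : (m i <= M0)%N by exact: le_sum.
have dT i : (d i <= T0)%N by exact: le_sum.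
rewrite (partition_big p (fun a : {ffun 'I_l -> 'I_M0.+1} => [forall i, a i <= m i]%N)); last first.
  move=> x _; apply/forallP => i; rewrite ffunE inordK ?leq_subr //.
  by rewrite ltnS (leq_trans (leq_subr _ _)).
rewrite /zrec; apply: eq_bigr => a /forallP Ha; cbv zeta.
set a' : idx l := [ffun i => nat_of_ord (a i)].
have a'E i : a' i = a i by rewrite ffunE.
have Xfacts x : PF T0.+1 m d (V x) -> p x == a ->
  [/\ forall i, a' i = (m i - V x i 0)%N,
      forall i, S0 T0 (shift (V x) i) = a' i &
      forall i, S1 T0 (shift (V x) i) = (d i - a' i)%N].
  move=> /forallP Px /eqP px.
  have E i : a' i = (m i - V x i 0)%N.
    have := congr1 (fun f : {ffun 'I_l -> 'I_M0.+1} => nat_of_ord (f i)) px.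
    rewrite /= ffunE inordK; first by move=> Hx; rewrite a'E -Hx.
    by rewrite ltnS (leq_trans (leq_subr _ _)).
  split => // i; have /andP [/eqP P0 /eqP P1] := Px i.
    by rewrite E -P0 S0_rec addKn.
  by rewrite E -P0 -P1 S0_rec S1_rec !addKn.

case: ifP => [/forallP Had|Had]; last first.
  apply: big1 => x /andP [Px px]; exfalso.
  have [E S0s S1s] := Xfacts x Px px.
  move/negbT: Had => /forallPn [i]; apply/negP; rewrite negbK.
  move/forallP: Px => /(_ i) /andP [_ /eqP <-].
  by rewrite S1_rec -[a' i]S0s leq_addr.
set d' : idx l := [ffun i => (d i - a' i)%N].
have d'E i : d' i = (d i - a' i)%N by rewrite ffunE.
set T1 := \sum_(i < l) d' i. set Ma := \sum_(i < l) a' i.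
have d'T i : (d' i <= T1)%N by exact: le_sum.
have aMa i : (a' i <= Ma)%N by exact: le_sum.
have T1T : (T1 <= T0)%N by apply: leq_sum => i _; rewrite d'E leq_subr.
rewrite (@Icoef_auxV _ _ a' d' T0.+1) //; rewrite mulr_sumr.
pose c i := (m i - a' i)%N.
pose h (y : X T1.+1 Ma.+1) := @B T0 M0 (unshift c (V y)).
pose k (x : X T0.+1 M0.+1) := @B T1 Ma (shift (V x)).
have Yfacts y : PF T0.+1 a' d' (V y) ->
   [/\ forall i t, (T0 <= t)%N -> V y i t = 0%N,
       forall i, S0 T0 (V y i) = a' i,
       forall i, S1 T0 (V y i) = d' i &
       V (h y) = unshift c (V y)].
  move=> /forallP Py.
  have Yout i t : (T0 <= t)%N -> V y i t = 0%N.
    move=> le; case: (ltnP t T0.+1) => [lt|ge]; last by rewrite V_out // (leq_trans _ ge).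
    case: (posnP (V y i t)) => // pos; exfalso.
    have /andP [/eqP P0 /eqP P1] := Py i.
    have h1 := S1_le lt pos; have h2 := S0_le (V y i) lt.
    rewrite P1 d'E in h1; rewrite P0 in h2; exact: (arith1 (Had i) h1 h2 pos (dT i) le).
  have S0Y i : S0 T0 (V y i) = a' i.
    have /andP [/eqP P0 _] := Py i.
    by rewrite -P0 (@S0_supp T0 T0.+1 _ (Yout i)).
  have S1Y i : S1 T0 (V y i) = d' i.
    have /andP [_ /eqP P1] := Py i.
    by rewrite -P1 (@S1_supp T0 T0.+1 _ (Yout i)).
  split => //; apply: VB => [i [|t]|i [|t]] /=.
  - by [].
  - by rewrite ltnS => /Yout.
  - by rewrite /c (leq_trans (leq_subr _ _)).
  - case: (ltnP t T0.+1) => [lt|ge]; last by rewrite V_out // (leq_trans _ ge).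
    have /andP [/eqP P0 _] := Py i.
    by rewrite (leq_trans (S0_le _ lt)) // P0 a'E (leq_trans (Ha i)).

apply: (@sum_bij _ _ _ _ _ _ _ h k).
- move=> x /andP [Px px]; have [E S0s S1s] := Xfacts x Px px.
  have sh_out i t : (T0 <= t)%N -> shift (V x) i t = 0%N.
    by move=> le; rewrite /shift V_out.
  have Vk : V (k x) = shift (V x).
    apply: VB => i t.
      move=> ge; case: (ltnP t T0) => [lt|]; last exact: sh_out.
      case: (posnP (shift (V x) i t)) => // pos; exfalso.
      have h1 := S1_le lt pos; rewrite S1s -d'E in h1.
      by have := leq_ltn_trans (leq_trans h1 (d'T i)) ge; rewrite ltnn.
    case: (ltnP t T0) => [lt|ge]; last by rewrite sh_out.
    by rewrite (leq_trans (S0_le _ lt)) // S0s.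
  rewrite Vk; apply/andP; split.
    apply/forallP => i.
    rewrite (@S0_supp T0 T0.+1 _ (sh_out i)) // (@S1_supp T0 T0.+1 _ (sh_out i)) //.
    by rewrite S0s S1s d'E !eqxx.
  rewrite /h Vk; have -> : unshift c (shift (V x)) = V x.
    apply: functional_extensionality => i; apply: functional_extensionality => t.
    case: t => [|t] //=; rewrite /c E subKn //.
    move/forallP: Px => /(_ i) /andP [/eqP <- _]; exact: S0_le.
  by rewrite BV.
- move=> y Qy; have [Yout S0Y S1Y Vh] := Yfacts y Qy.
  apply/andP; split; [apply/andP; split|].
  + rewrite Vh; apply/forallP => i; rewrite S0_rec S1_rec S0Y S1Y /= d'E /c.
    rewrite subnK; last by rewrite a'E Ha.
    by rewrite addnC subnK ?Had //; apply/andP.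
  + apply/eqP/ffunP => i; rewrite ffunE Vh /=; apply: val_inj.
    by rewrite /= /c subKn ?a'E ?Ha // inordK.
  + by rewrite /k Vh; have -> : shift (unshift c (V y)) = V y by []; rewrite BV.
- move=> y Qy; have [Yout S0Y S1Y Vh] := Yfacts y Qy.
  rewrite Vh /fF (@QF_unshift T0 c (V y) a' S0Y) (@QF_supp T0 T0.+1 (V y) Yout) //.
  rewrite qpowD.
  have -> : \prod_(i < l) \prod_(t < T0.+1) qf (unshift c (V y) i t) =
     \prod_(i < l) qf (c i) * \prod_(i < l) \prod_(t < T0.+1) qf (V y i t).
    rewrite -big_split; apply: eq_bigr => i _; rewrite big_ord_recl /=; congr (_ * _).
    rewrite [RHS](@big_supp _ _ _ (fun t => qf (V y i t)) T0) //; last first.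
      by move=> t /(Yout i) ->; rewrite /qfac big_nil.
  have -> : qfacv qpow e1 [ffun i0 => (m i0 - a' i0)%N] = \prod_(i < l) qf (c i).
    by rewrite /qfacv; apply: eq_bigr => i _; rewrite ffunE.
  rewrite invrM ?unitr_prod //; last by move=> i _; apply: unitr_prod.
  by rewrite [Z in _ * Z = _]mulrC mulrACA.
Qed.

Lemma Icoef0 (d : idx l) :
  Icoef qpow e1 C (idx0 l) d = (d == idx0 l)%:R.
Proof.
rewrite /Icoef (@Icoef_auxV _ _ (idx0 l) d (\sum_(i < l) d i).+1) //.
set T0 := (\sum_(i < l) d i). set M0 := (\sum_(i < l) idx0 l i).
pose z := @B T0 M0 (fun _ _ => 0%N).
have Vz : V z = (fun _ _ => 0%N) by apply: VB.
have HP mt : PF T0.+1 (idx0 l) d (V mt) = (d == idx0 l) && (mt == z).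
  apply/idP/idP.
    move=> /forallP Pm.
    have V0 : V mt = (fun _ _ => 0%N).
      apply: functional_extensionality => i; apply: functional_extensionality => t.
      case: (ltnP t T0.+1) => [lt|ge]; last by rewrite V_out.
      have /andP [/eqP P0 _] := Pm i; move: (S0_le (V mt i) lt).
      by rewrite P0 ffunE leqn0 => /eqP.
    apply/andP; split.
      apply/eqP/ffunP => i; have /andP [_ /eqP <-] := Pm i.
      by rewrite V0 ffunE /S1 big1 // => t _; rewrite muln0.
    by apply/eqP; rewrite -(BV mt) V0.
  case/andP => /eqP -> /eqP ->; rewrite Vz; apply/forallP => i.
  by rewrite ffunE /S0 /S1 !big1 // => t _; rewrite muln0.
case: eqP => [Ed|Nd].
  rewrite (big_pred1 z) => [|mt]; last by rewrite /= HP Ed eqxx.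
  rewrite Vz /fF /QF.
  have -> : S2 T0.+1 (fun=> 0%N) (fun=> 0%N) = 0%N.
    by rewrite /S2 big1 // => t _; rewrite big1 // => t' _; rewrite muln0.
  have -> : S1 T0.+1 (fun=> 0%N) = 0%N.
    by rewrite /S1 big1 // => t _; rewrite muln0.
  have -> : \sum_(i < l) \sum_(i' < l) C i i' *+ 0 = 0.
    by rewrite big1 // => i _; rewrite big1 // => i' _; rewrite mulr0n.
  have -> : \sum_(i < l) C i i *+ 0 = 0.
    by rewrite big1 // => i _; rewrite mulr0n.
  have -> : \prod_(i < l) \prod_(t < T0.+1) qf 0 = 1.
    by rewrite big1 // => i _; rewrite big1 // => t _; rewrite /qfac big_nil.
  by rewrite subr0 scaler0 qpow0 invr1 mulr1.
rewrite big_pred0 // => mt; rewrite HP; case: eqP => //.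
Qed.

End Main.

Lemma sum_pos l (m : idx l) : m != idx0 l -> (0 < \sum_(i < l) m i)%N.
Proof.
move=> nm; case: (posnP (\sum_(i < l) m i)) => // /eqP.
rewrite sum_nat_eq0 => /forallP H; case/eqP: nm; apply/ffunP => i.
by rewrite ffunE; exact/eqP/H.
Qed.

Lemma sum_sub l (a d : idx l) : (forall i, a i <= d i)%N ->
  (\sum_(i < l) [ffun i => d i - a i] i + \sum_(i < l) a i = \sum_(i < l) d i)%N.
Proof.
move=> H; rewrite -big_split; apply: eq_bigr => i _; rewrite ffunE /=; exact: subnK.
Qed.

Theorem proposition2p4 (A : comUnitRingType) (G : lmodType rat)
    (qpow : G -> A) (e1 : G) (l : nat) (C : 'M[G]_l)
    (qpow0 : qpow 0 = 1)
    (qpowD : forall x y : G, qpow (x + y) = qpow x * qpow y)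
    (qfac_unit : forall n : nat, qfac qpow e1 n \is a GRing.unit)
    (Csym : C^T = C) :
  (* the recursion, coefficientwise in z *)
  (forall m d : idx l,
      Icoef qpow e1 C m d = zrec qpow e1 C (Icoef qpow e1 C) m d) /\
  (* uniqueness of the solution with I_{C,0} = 1 *)
  (forall J : idx l -> idx l -> A,
      (forall d : idx l, J (idx0 l) d = (d == idx0 l)%:R) ->
      (forall m d : idx l, J m d = zrec qpow e1 C J m d) ->
      forall m d : idx l, J m d = Icoef qpow e1 C m d).
Proof.
have RM := rec_main C qpowD qfac_unit.
split; first exact: RM.
move=> J J0 JR.
suff H : forall n (m d : idx l), (\sum_(i < l) m i + \sum_(i < l) d i <= n)%N ->
    J m d = Icoef qpow e1 C m d.
  by move=> m d; exact: (H _ _ _ (leqnn _)).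
elim => [|n IH] m d Hmd; case: (eqVneq m (idx0 l)) => [->|nm].
- by rewrite J0 (Icoef0 e1 C qpow0).
- by have := sum_pos nm; rewrite lt0n; move: Hmd; rewrite leqn0 addn_eq0 => /andP [->].
- by rewrite J0 (Icoef0 e1 C qpow0).
rewrite JR RM /zrec; apply: eq_bigr => a _; cbv zeta.
case: ifP => // /forallP Had; congr (_ * _); apply: IH.
rewrite addnC sum_sub //.
exact: (arith2 (sum_pos nm) Hmd).
Qed.
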